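(* Let $n \ge 2$. Amongst all connected bipartite graphs on $n$ vertices, the maximum value of the normalized Graovac-Ghorbani index $\mathrm{NGG}$, and also the maximum value of the Graovac-Ghorbani index $\mathrm{GG}$, is attained by the complete bipartite graph $K_{\lfloor n/2\rfloor, \lceil n/2\rceil}$, and by no other such graph.
   Context: All graphs are finite, simple, undirected and connected. For an edge $uv$ of a graph $G$, let $n_u = |\{w \in V(G) : d(w,u) < d(w,v)\}|$ and $n_v = |\{w \in V(G) : d(w,v) < d(w,u)\}|$, where $d$ is the shortest-path distance. The Graovac-Ghorbani index is $\mathrm{GG}(G) = \sum_{uv \in E(G)} \sqrt{\frac{n_u + n_v - 2}{n_u n_v}}$ and the normalized Graovac-Ghorbani index is $\mathrm{NGG}(G) = \sum_{uv \in E(G)} \frac{1}{\sqrt{n_u n_v}}$. *)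

(* Defs.v *)
From HB Require Import structures.
From mathcomp Require Import all_boot all_order all_algebra all_fingroup.
Set Implicit Arguments. Unset Strict Implicit. Unset Printing Implicit Defensive.
Import Order.TTheory GRing.Theory Num.Theory.

Definition simple_graph (n : nat) (e : rel 'I_n) : Prop :=
  (forall u v, e u v = e v u) /\ (forall u, ~~ e u u).

Definition connected_graph (n : nat) (e : rel 'I_n) : Prop :=
  forall u v, connect e u v.

Definition bipartite (n : nat) (e : rel 'I_n) : Prop :=
  exists A : {set 'I_n}, forall u v, e u v -> (u \in A) != (v \in A).

Fixpoint walk (n : nat) (e : rel 'I_n) (k : nat) (u v : 'I_n) : bool :=
  match k with
  | 0 => u == v
  | k'.+1 => [exists w, e u w && walk e k' w v]
  end.

(* shortest-path distance: least k < n with a k-walk from u to v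
   (equals n if v is unreachable, which never happens for connected graphs) *)
Definition dist (n : nat) (e : rel 'I_n) (u v : 'I_n) : nat :=
  find (fun k => walk e k u v) (iota 0 n).

Definition nclose (n : nat) (e : rel 'I_n) (u v : 'I_n) : nat :=
  #|[set w | dist e w u < dist e w v]|.

Local Open Scope ring_scope.

Definition GG (R : rcfType) (n : nat) (e : rel 'I_n) : R :=
  \sum_(u : 'I_n) \sum_(v : 'I_n | (u < v)%N && e u v)
     Num.sqrt (((nclose e u v)%:R + (nclose e v u)%:R - 2)
               / ((nclose e u v)%:R * (nclose e v u)%:R)).

Definition NGG (R : rcfType) (n : nat) (e : rel 'I_n) : R :=
  \sum_(u : 'I_n) \sum_(v : 'I_n | (u < v)%N && e u v)
     (Num.sqrt ((nclose e u v)%:R * (nclose e v u)%:R))^-1.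

(* complete bipartite graph K_{floor(n/2), ceil(n/2)} on 'I_n:
   parts {i | i < n/2} (size floor(n/2)) and its complement *)
Definition Kbip (n : nat) : rel 'I_n :=
  fun u v => (u < n./2)%N != (v < n./2)%N.

Arguments Kbip n : clear implicits.

Definition graph_iso (n : nat) (e f : rel 'I_n) : Prop :=
  exists p : {perm 'I_n}, forall u v, e u v = f (p u) (p v).

(* Main.v *)
Require Import Defs.
From HB Require Import structures.
From mathcomp Require Import all_boot all_order all_algebra all_fingroup.
From mathcomp Require Import zify ring lra.
Import Order.TTheory GRing.Theory Num.Theory.
Set Implicit Arguments. Unset Strict Implicit. Unset Printing Implicit Defensive.

Local Close Scope ring_scope.

Lemma walk_parity n (e : rel 'I_n) (A : {set 'I_n}) :
  (forall u v, e u v -> (u \in A) != (v \in A)) ->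
  forall k w u, walk e k w u -> ((w \in A) != (u \in A)) = odd k.
Proof.
move=> hA; elim=> [|k IH] w u /=; first by move/eqP->; rewrite eqxx.
case/existsP=> x /andP[ewx /IH <-]; move: (hA _ _ ewx).
by case: (w \in A); case: (x \in A); case: (u \in A).
Qed.

Lemma walk_path n (e : rel 'I_n) w p : path e w p -> walk e (size p) w (last w p).
Proof.
elim: p w => [|x p IH] w /=; first by rewrite eqxx.
case/andP=> ewx hp; apply/existsP; exists x; rewrite ewx /=; exact: IH.
Qed.

Lemma connect_walk n (e : rel 'I_n) w u : connect e w u ->
  exists2 k, (k < n)%N & walk e k w u.
Proof.
case/connectP=> p0 hp0 ->; case: (shortenP hp0)=> p hp huniq _.
exists (size p); last exact: walk_path.
have := max_card (mem (w :: p)); rewrite (card_uniqP huniq) card_ord /=.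
done.
Qed.

Lemma dist_walk n (e : rel 'I_n) w u : connect e w u ->
  walk e (dist e w u) w u /\ (dist e w u < n)%N.
Proof.
case/connect_walk=> k kn hk.
have hh : has (fun k => walk e k w u) (iota 0 n).
  by apply/hasP; exists k => //; rewrite mem_iota.
have := nth_find 0%N hh; rewrite has_find size_iota in hh.
by rewrite /dist nth_iota // add0n.
Qed.

Lemma dist_min n (e : rel 'I_n) w u k : (k < n)%N -> walk e k w u -> (dist e w u <= k)%N.
Proof.
move=> kn hk; rewrite leqNgt; apply/negP=> /(before_find 0%N).
by rewrite nth_iota // add0n hk.
Qed.

Lemma dist0 n (e : rel 'I_n) w u : connect e w u -> (dist e w u == 0%N) = (w == u).
Proof.
move=> c; case: (dist_walk c) => hw hn; apply/eqP/eqP.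
  by move=> h; move: hw; rewrite h => /eqP.
move=> h; apply/eqP; rewrite -leqn0; apply: (dist_min (k := 0%N)).
  exact: leq_ltn_trans hn.
by rewrite /= h.
Qed.

Lemma dist1 n (e : rel 'I_n) w u : connect e w u -> (forall x, ~~ e x x) ->
  (dist e w u == 1%N) = e w u.
Proof.
move=> c irr; case: (dist_walk c) => hw hn; apply/eqP/idP.
  move=> h; move: hw; rewrite h /= => /existsP[x /andP[ewx hx]].
  by move: hx => /= /eqP <-.
move=> ewu; have wu : w != u by apply/eqP => wu; move: (irr w); rewrite {2}wu ewu.
have h1 : (dist e w u <= 1)%N.
  apply: dist_min; last by apply/existsP; exists u; rewrite ewu eqxx.
  by move: wu; rewrite -val_eqE /=; have := ltn_ord w; have := ltn_ord u; lia.
have : dist e w u != 0%N by rewrite dist0.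
by move: h1; case: (dist e w u) => [|[]].
Qed.

Local Close Scope ring_scope.

Definition deg n (e : rel 'I_n) u := #|[set x | e u x]|.

Lemma dist_neq n (e : rel 'I_n) (A : {set 'I_n}) u v w :
  connected_graph e -> (forall u v, e u v -> (u \in A) != (v \in A)) ->
  e u v -> dist e w u != dist e w v.
Proof.
move=> c hA euv; have [hu _] := dist_walk (c w u); have [hv _] := dist_walk (c w v).
have pu := walk_parity hA hu; have pv := walk_parity hA hv.
apply/eqP=> eq; move: pu pv (hA _ _ euv); rewrite eq => <-.
by case: (w \in A); case: (u \in A); case: (v \in A).
Qed.

Lemma nclose_add n (e : rel 'I_n) (A : {set 'I_n}) u v :
  connected_graph e -> (forall u v, e u v -> (u \in A) != (v \in A)) ->
  e u v -> (nclose e u v + nclose e v u)%N = n.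
Proof.
move=> c hA euv; rewrite /nclose -cardsUI.
have -> : [set w | dist e w u < dist e w v] :&: [set w | dist e w v < dist e w u] = set0.
  apply/setP=> w; rewrite !inE; apply/negP=> /andP[h1 h2].
  by move: (ltn_trans h1 h2); rewrite ltnn.
have -> : [set w | dist e w u < dist e w v] :|: [set w | dist e w v < dist e w u] = setT.
  apply/setP=> w; rewrite !inE; have := dist_neq w c hA euv.
  by rewrite neq_ltn.
by rewrite cards0 addn0 cardsT card_ord.
Qed.

Lemma deg_le n (e : rel 'I_n) (A : {set 'I_n}) u v :
  simple_graph e -> connected_graph e -> (forall u v, e u v -> (u \in A) != (v \in A)) ->
  e u v -> (deg e u <= nclose e u v)%N.
Proof.
move=> [sym irr] c hA euv.
have uv : u != v by apply/eqP=> uv; move: (irr u); rewrite {2}uv euv.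
have sub : u |: ([set x | e u x] :\ v) \subset [set w | dist e w u < dist e w v].
  apply/subsetP=> x; rewrite !inE => /orP[/eqP->|/andP[xv eux]].
    have := dist0 (c u u); rewrite eqxx => /eqP->.
    by rewrite lt0n dist0 // uv.
  have /eqP-> : dist e x u == 1%N by rewrite dist1 // sym.
  have h0 : dist e x v != 0%N by rewrite dist0.
  have h1 : dist e x v != 1%N.
    have := dist_neq x c hA euv; apply: contra => /eqP->.
    by rewrite dist1 // sym.
  by move: h0 h1; case: (dist e x v) => [|[]].
have := subset_leq_card sub; rewrite cardsU1 !inE (negbTE (irr u)) andbF /=.
by rewrite /deg /nclose (cardsD1 v [set x | e u x]) inE euv.
Qed.

Lemma nclose_cb n (e : rel 'I_n) (A : {set 'I_n}) u v :
  simple_graph e -> connected_graph e -> (forall x y, e x y = ((x \in A) != (y \in A))) ->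
  e u v -> nclose e u v = deg e u.
Proof.
move=> [sym irr] c hA euv.
have hA' : forall u v, e u v -> (u \in A) != (v \in A) by move=> x y; rewrite hA.
apply/eqP; rewrite eqn_leq (deg_le (conj sym irr) c hA' euv) andbT.
have uv : u != v by apply/eqP=> uv; move: (irr u); rewrite {2}uv euv.
have sub : [set w | dist e w u < dist e w v] \subset u |: ([set x | e u x] :\ v).
  apply/subsetP=> x; rewrite !inE => hx.
  case: eqP => [//|/eqP xu] /=.
  have xv : x != v.
    apply/eqP=> xv; move: hx; rewrite xv.
    have := dist0 (c v v); rewrite eqxx => /eqP->; by [].
  rewrite xv /=; apply/negPn/negP => nux.
  have exv : e x v.
    by move: nux euv; rewrite !hA; case: (u \in A); case: (x \in A); case: (v \in A).
  move: hx; have /eqP-> : dist e x v == 1%N by rewrite dist1.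
  have h0 : dist e x u != 0%N by rewrite dist0.
  have h1 : dist e x u != 1%N by rewrite dist1 // sym.
  by move: h0 h1; case: (dist e x u) => [|[]].
have := subset_leq_card sub; rewrite cardsU1 !inE (negbTE (irr u)) andbF /=.
by rewrite /deg /nclose (cardsD1 v [set x | e u x]) inE euv.
Qed.

Local Open Scope ring_scope.

Lemma edge_sum_sym (R : nmodType) n (e : rel 'I_n) (F : 'I_n -> 'I_n -> R) :
  simple_graph e ->
  \sum_(u : 'I_n) \sum_(v : 'I_n | (u < v)%N && e u v) (F u v + F v u) = \sum_(u : 'I_n) \sum_(v : 'I_n | e u v) F u v.
Proof.
move=> [sym irr].
have E : forall u, \sum_(v : 'I_n | e u v) F u v =
   \sum_(v : 'I_n | (u < v)%N && e u v) F u v + \sum_(v : 'I_n | (v < u)%N && e u v) F u v.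
  move=> u; rewrite (bigID (fun v : 'I_n => (u < v)%N)) /=; congr (_ + _).
    by apply: eq_bigl => v; rewrite andbC.
  apply: eq_bigl => v; case: (eqVneq u v) => [<-|uv].
    by rewrite ltnn (negbTE (irr u)).
  rewrite -leqNgt leq_eqVlt andbC; congr (_ && _).
  by move: uv; rewrite eq_sym -val_eqE /= => /negbTE->.
rewrite (eq_bigr _ (fun u _ => E u)) big_split /=.
rewrite (eq_bigr _ (fun u _ => big_split _ _ _ _ _)) big_split /=; congr (_ + _).
rewrite [RHS](eq_bigr _ (fun u _ => big_mkcond _ _)) exchange_big /=.
rewrite [LHS](eq_bigr _ (fun u _ => big_mkcond _ _)) /=.
apply: eq_bigr => u _; apply: eq_bigr => v _; rewrite sym.
by [].
Qed.

Local Open Scope ring_scope.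

Definition medges n (e : rel 'I_n) : nat :=
  (\sum_(u : 'I_n) \sum_(v : 'I_n | (u < v)%N && e u v) 1)%N.

Lemma deg_sum (R : pzRingType) n (e : rel 'I_n) u (c : R) :
  \sum_(v : 'I_n | e u v) c = c * (deg e u)%:R.
Proof.
rewrite /deg -sum1_card natr_sum mulr_sumr.
rewrite (eq_bigl (fun v => v \in [set x | e u x])); last by move=> v; rewrite inE.
by apply: eq_bigr => v _; rewrite mulr1.
Qed.

Lemma deg_pos n (e : rel 'I_n) u v : e u v -> (0 < deg e u)%N.
Proof. by move=> euv; rewrite /deg (cardsD1 v) inE euv. Qed.

Lemma medges_deg n (e : rel 'I_n) : simple_graph e ->
  (2 * medges e)%N = (\sum_(u : 'I_n) deg e u)%N.
Proof.
move=> sg; rewrite /medges big_distrr /=.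
rewrite (eq_bigr (fun u : 'I_n => \sum_(v : 'I_n | (u < v)%N && e u v) (1 + 1)%N)); last first.
  by move=> u _; rewrite big_distrr /= muln1.
have := edge_sum_sym (fun _ _ => 1%N) sg => /= ->.
apply: eq_bigr => u _; rewrite /deg -sum1_card.
by apply: eq_bigl => v; rewrite inE.
Qed.


Lemma sum_inv_le (R : rcfType) n (e : rel 'I_n) (A : {set 'I_n}) :
  (0 < n)%N -> simple_graph e -> connected_graph e -> (forall u v, e u v -> (u \in A) != (v \in A)) ->
  \sum_(u : 'I_n) \sum_(v : 'I_n | (u < v)%N && e u v)
     (((nclose e u v)%:R * (nclose e v u)%:R)^-1 : R) <= 1.
Proof.
move=> n0 sg c hA.
have pos : forall u v, e u v -> (0 < (nclose e u v)%:R :> R).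
  move=> u v euv; rewrite ltr0n; apply: leq_trans (deg_le sg c hA euv).
  exact: deg_pos euv.
rewrite (eq_bigr (fun u : 'I_n => \sum_(v : 'I_n | (u < v)%N && e u v)
     (n%:R^-1 * (((nclose e u v)%:R)^-1 + ((nclose e v u)%:R)^-1) : R))); last first.
  move=> u _; apply: eq_bigr => v /andP[_ euv].
  have euv' : e v u by rewrite sg.1.
  have hn := nclose_add c hA euv.
  have p1 := pos _ _ euv; have p2 := pos _ _ euv'.
  have hn' : (n%:R : R) = (nclose e u v)%:R + (nclose e v u)%:R by rewrite -natrD hn.
  rewrite hn'; field.
  by rewrite -hn' (lt0r_neq0 p1) (lt0r_neq0 p2) pnatr_eq0 -lt0n n0.
rewrite (eq_bigr _ (fun u _ => (esym (mulr_sumr _ _ _ _)))) -mulr_sumr.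
rewrite (edge_sum_sym (fun u v => ((nclose e u v)%:R)^-1 : R) sg).
have h1 : n%:R^-1 * n%:R = 1 :> R by rewrite mulVf // pnatr_eq0 -lt0n n0.
rewrite -[X in _ <= X]h1 ler_pM2l ?invr_gt0 ?ltr0n //.
apply: (le_trans (y := \sum_(u : 'I_n) \sum_(v : 'I_n | e u v) ((deg e u)%:R^-1 : R))).
  apply: ler_sum => u _; apply: ler_sum => v euv.
  rewrite lef_pV2 ?posrE ?ltr0n ?(deg_pos euv) ?(pos _ _ euv) //; last by rewrite -(ltr0n R) pos.
  rewrite ler_nat; exact: deg_le sg c hA euv.
apply: (le_trans (y := \sum_(u : 'I_n) (1:R))); last by rewrite sumr_const card_ord.
apply: ler_sum => u _.
rewrite deg_sum; case: (posnP (deg e u)) => [->|h]; first by rewrite mulr0.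
by rewrite mulVf // pnatr_eq0 -lt0n h.
Qed.

Lemma amgm_inv (R : rcfType) (t x : R) : 0 < t -> 2 * x <= t * x ^+ 2 + t^-1.
Proof.
move=> t0; rewrite -subr_ge0.
have -> : t * x ^+ 2 + t^-1 - 2 * x = t^-1 * (t * x - 1) ^+ 2.
  by field; rewrite gt_eqF.
by apply: mulr_ge0; [rewrite invr_ge0 ltW | apply: sqr_ge0].
Qed.

Lemma NGG_bound (R : rcfType) n (e : rel 'I_n) (A : {set 'I_n}) (t : R) :
  (0 < n)%N -> simple_graph e -> connected_graph e ->
  (forall u v, e u v -> (u \in A) != (v \in A)) -> 0 < t ->
  2 * NGG R e <= t + (medges e)%:R / t.
Proof.
move=> n0 sg c hA t0; rewrite /NGG mulr_sumr.
apply: (le_trans (y := \sum_(u : 'I_n) \sum_(v : 'I_n | (u < v)%N && e u v)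
     (t * ((nclose e u v)%:R * (nclose e v u)%:R)^-1 + t^-1))).
  apply: ler_sum => u _; rewrite mulr_sumr; apply: ler_sum => v _.
  have -> : ((nclose e u v)%:R * (nclose e v u)%:R)^-1 =
            ((Num.sqrt ((nclose e u v)%:R * (nclose e v u)%:R))^-1) ^+ 2 :> R.
    by rewrite exprVn sqr_sqrtr // mulr_ge0 ?ler0n.
  exact: amgm_inv.
rewrite (eq_bigr _ (fun u _ => big_split _ _ _ _ _)) big_split /=.
rewrite (eq_bigr _ (fun u _ => esym (mulr_sumr _ _ _ _))) -mulr_sumr.
apply: lerD.
  by rewrite -[X in _ <= X]mulr1 ler_pM2l // (sum_inv_le _ n0 sg c hA).
rewrite le_eqVlt; apply/orP; left; apply/eqP.
rewrite /medges natr_sum mulrC mulr_sumr; apply: eq_bigr => u _.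
rewrite natr_sum mulr_sumr; apply: eq_bigr => v _; by rewrite mulr1.
Qed.

Lemma GG_NGG (R : rcfType) n (e : rel 'I_n) (A : {set 'I_n}) :
  (2 <= n)%N -> connected_graph e ->
  (forall u v, e u v -> (u \in A) != (v \in A)) ->
  GG R e = Num.sqrt (n%:R - 2) * NGG R e.
Proof.
move=> n2 c hA; rewrite /GG /NGG mulr_sumr; apply: eq_bigr => u _.
rewrite mulr_sumr; apply: eq_bigr => v /andP[_ euv].
rewrite -natrD (nclose_add c hA euv) [LHS]sqrtrM; last first.
  by rewrite subr_ge0 (ler_nat R 2 n).
by rewrite sqrtrV // mulr_ge0 ?ler0n.
Qed.

Local Close Scope ring_scope.

Definition side n (A : {set 'I_n}) u := [set x | (x \in A) != (u \in A)].

Lemma sum_side n (A : {set 'I_n}) :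
  (\sum_(u : 'I_n) #|side A u| = 2 * (#|A| * #|~: A|))%N.
Proof.
rewrite (bigID (fun u => u \in A)) /=.
rewrite (eq_bigr (fun _ => #|~: A|)); last first.
  by move=> u uA; apply: eq_card => x; rewrite !inE uA; case: (x \in A).
rewrite [X in (_ + X)%N](eq_bigr (fun _ => #|A|)); last first.
  by move=> u uA; apply: eq_card => x; rewrite !inE (negbTE uA); case: (x \in A).
rewrite sum_nat_const.
rewrite (eq_bigl (fun u => u \in ~: A)); last by move=> u; rewrite inE.
by rewrite sum_nat_const mulnC mul2n -addnn; congr (_ + _); rewrite mulnC.
Qed.

Lemma deg_side n (e : rel 'I_n) (A : {set 'I_n}) u :
  (forall u v, e u v -> (u \in A) != (v \in A)) ->
  [set x | e u x] \subset side A u.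
Proof.
by move=> hA; apply/subsetP=> x; rewrite !inE => /hA; rewrite eq_sym.
Qed.

Lemma medges_le n (e : rel 'I_n) (A : {set 'I_n}) :
  simple_graph e -> (forall u v, e u v -> (u \in A) != (v \in A)) ->
  (medges e <= #|A| * #|~: A|)%N.
Proof.
move=> sg hA; rewrite -(leq_pmul2l (isT : 0 < 2)%N) medges_deg // -sum_side.
by apply: leq_sum => u _; apply: subset_leq_card; apply: deg_side.
Qed.

Lemma medges_eq n (e : rel 'I_n) (A : {set 'I_n}) :
  simple_graph e -> (forall u v, e u v -> (u \in A) != (v \in A)) ->
  medges e = (#|A| * #|~: A|)%N -> forall u v, e u v = ((u \in A) != (v \in A)).
Proof.
move=> sg hA hm u v.
have hle : forall u, (deg e u <= #|side A u|)%N.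
  by move=> w; apply: subset_leq_card; apply: deg_side.
have h0 : (\sum_(u : 'I_n) (#|side A u| - deg e u) == 0)%N.
  by rewrite sumnB // sum_side -hm -medges_deg // subnn.
move: h0; rewrite sum_nat_eq0 => /forallP /(_ u) /=; rewrite subn_eq0 => h.
have : [set x | e u x] == side A u by rewrite eqEcard deg_side.
by move/eqP/setP/(_ v); rewrite !inE eq_sym.
Qed.

Lemma cb_simple n (A : {set 'I_n}) :
  simple_graph (fun x y : 'I_n => (x \in A) != (y \in A)).
Proof. by split=> [u v|u]; [rewrite eq_sym | rewrite eqxx]. Qed.

Lemma cb_medges n (e : rel 'I_n) (A : {set 'I_n}) :
  (forall x y, e x y = ((x \in A) != (y \in A))) -> medges e = (#|A| * #|~: A|)%N.
Proof.
move=> hA.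
have sg : simple_graph e by split=> [u v|u]; rewrite !hA ?eqxx // eq_sym.
apply/eqP; rewrite -(eqn_pmul2l (isT : 0 < 2)%N) medges_deg // -sum_side.
apply/eqP; apply: eq_bigr => u _; apply: eq_card => x.
by rewrite !inE hA eq_sym.
Qed.

Local Open Scope ring_scope.

Lemma card_side n (A : {set 'I_n}) u :
  #|side A u| = if u \in A then #|~: A| else #|A|.
Proof.
by case: ifP => uA; apply: eq_card => x; rewrite !inE uA; case: (x \in A).
Qed.

Lemma NGG_cb (R : rcfType) n (e : rel 'I_n) (A : {set 'I_n}) :
  connected_graph e -> (forall x y, e x y = ((x \in A) != (y \in A))) ->
  NGG R e = Num.sqrt ((#|A| * #|~: A|)%N%:R).
Proof.
move=> c hA.
have sg : simple_graph e by split=> [u v|u]; rewrite !hA ?eqxx // eq_sym.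
set P := (#|A| * #|~: A|)%N.
rewrite /NGG (eq_bigr (fun u : 'I_n => \sum_(v : 'I_n | (u < v)%N && e u v)
    (Num.sqrt (P%:R))^-1)); last first.
  move=> u _; apply: eq_bigr => v /andP[_ euv].
  have evu : e v u by rewrite sg.1.
  rewrite (nclose_cb sg c hA euv) (nclose_cb sg c hA evu) /deg.
  have -> : [set x | e u x] = side A u by apply/setP=> x; rewrite !inE hA eq_sym.
  have -> : [set x | e v x] = side A v by apply/setP=> x; rewrite !inE hA eq_sym.
  rewrite !card_side; move: euv; rewrite hA /P -natrM.
  by case: (u \in A); case: (v \in A) => //= _; rewrite mulnC.
have -> : \sum_(u : 'I_n) \sum_(v : 'I_n | (u < v)%N && e u v) (Num.sqrt (P%:R))^-1
    = (Num.sqrt (P%:R : R))^-1 * (medges e)%:R.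
  rewrite /medges natr_sum mulr_sumr; apply: eq_bigr => u _.
  by rewrite natr_sum mulr_sumr; apply: eq_bigr => v _; rewrite mulr1.
rewrite (cb_medges hA) -/P.
have [->|P0] := eqVneq P 0%N; first by rewrite sqrtr0 mulr0.
have hs : Num.sqrt (P%:R : R) != 0 by rewrite sqrtr_eq0 -ltNge ltr0n lt0n.
rewrite -{2}(@sqr_sqrtr _ (P%:R)) ?ler0n // expr2 mulrA mulVf // mul1r. by [].
Qed.

Local Close Scope ring_scope.

Lemma iso_cb n (e : rel 'I_n) (A : {set 'I_n}) :
  #|A| = n./2 -> (forall x y, e x y = ((x \in A) != (y \in A))) -> graph_iso e (Kbip n).
Proof.
move=> cA hA.
pose s := enum A ++ enum (~: A).
have ins : forall u, u \in s by move=> u; rewrite mem_cat !mem_enum inE orbN.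
have ss : size s = n by rewrite size_cat -!cardE cardsC card_ord.
have lt : forall u, (index u s < n)%N by move=> u; have := index_mem u s; rewrite ins ss.
pose f u := Ordinal (lt u).
have finj : injective f.
  move=> u w /(congr1 val) /= h; by rewrite -(nth_index u (ins u)) h nth_index.
exists (perm finj) => u v; rewrite /Kbip !permE /= hA.
have key : forall w, (index w s < n./2)%N = (w \in A).
  move=> w; rewrite index_cat mem_enum; case: ifP => wA.
    by rewrite -cA cardE index_mem mem_enum.
  by rewrite -cardE cA ltnNge leq_addr.
by rewrite !key.
Qed.

Local Close Scope ring_scope.

Definition A0 n := [set i : 'I_n | (i < n./2)%N].

Lemma Kbip_cb n x y : Kbip n x y = ((x \in A0 n) != (y \in A0 n)).
Proof. by rewrite !inE. Qed.

Lemma card_A0 n : #|A0 n| = n./2.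
Proof.
have le : (n./2 <= n)%N by rewrite -{2}(odd_double_half n); lia.
have -> : A0 n = [set widen_ord le j | j : 'I_n./2].
  apply/setP=> i; rewrite inE; apply/idP/imsetP.
    by move=> hi; exists (Ordinal hi) => //; apply: val_inj.
  by case=> j _ ->; rewrite /= ltn_ord.
rewrite card_imset ?cardT ?size_enum_ord //.
by move=> x y /(congr1 val) /= /val_inj.
Qed.

Lemma Kbip_conn n : (2 <= n)%N -> connected_graph (Kbip n).
Proof.
move=> n2.
have h0 : (0 < n)%N by lia.
have h1 : (n.-1 < n)%N by lia.
pose z0 := Ordinal h0; pose z1 := Ordinal h1.
have hh : (0 < n./2)%N && ~~ (n.-1 < n./2)%N.
  by have := odd_double_half n; move=> hn; apply/andP; split; [lia | rewrite -leqNgt; lia].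
have e01 : Kbip n z0 z1 by rewrite /Kbip /=; case/andP: hh => -> /negbTE ->.
have sym : symmetric (Kbip n) by move=> x y; rewrite /Kbip eq_sym.
have toz0 : forall x, connect (Kbip n) x z0.
  move=> x; case hx: (x < n./2)%N.
    apply: (connect_trans (y := z1)); apply: connect1.
      by rewrite /Kbip hx /=; case/andP: hh => _ /negbTE ->.
    by rewrite sym.
  by apply: connect1; rewrite /Kbip hx /=; case/andP: hh => ->.
move=> u v; apply: (connect_trans (toz0 u)).
by rewrite (sym_connect_sym sym) toz0.
Qed.

Lemma medges_pos n (e : rel 'I_n) : (2 <= n)%N -> simple_graph e -> connected_graph e ->
  (0 < medges e)%N.
Proof.
move=> n2 sg c.
have h0 : (0 < n)%N by lia.
have h1 : (n.-1 < n)%N by lia.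
pose z0 := Ordinal h0; pose z1 := Ordinal h1.
have := c z0 z1; case/connectP => p hp hl.
case: p hp hl => [|x p] /=.
  by move=> _ /(congr1 val) /=; lia.
case/andP=> ex _ _.
rewrite -(ltn_pmul2l (isT : 0 < 2)%N) muln0 medges_deg //.
rewrite (bigD1 z0) //=; apply: leq_trans (leq_addr _ _).
exact: deg_pos ex.
Qed.

Local Close Scope ring_scope.

Lemma core k j d : (k <= d)%N -> (k * (j + d) <= (k + j) * d)%N.
Proof.
move=> kd; rewrite mulnDr mulnDl [k * j]mulnC addnC leq_add2l.
by rewrite leq_mul2l kd orbT.
Qed.
Lemma core2 k j d : (k < d)%N -> (0 < j)%N -> (k * (j + d) < (k + j) * d)%N.
Proof.
move=> kd j0; rewrite mulnDr mulnDl [k * j]mulnC addnC ltn_add2l.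
by rewrite ltn_mul2l kd j0.
Qed.
Lemma kk_le n k : (k <= n./2 -> k * (n - k) <= n./2 * (n - n./2))%N.
Proof.
move=> kh; have hn := odd_double_half n.
have hd : (n./2 <= n - n./2)%N by lia.
have e1 : (n - k = (n./2 - k) + (n - n./2))%N by lia.
have e2 : (n./2 = k + (n./2 - k))%N by lia.
have := @core k (n./2 - k) (n - n./2).
by rewrite -e1 -e2; apply; lia.
Qed.
Lemma kk_eq n k : (k <= n./2 -> k * (n - k) = n./2 * (n - n./2) -> k = n./2)%N.
Proof.
move=> kh heq; have hn := odd_double_half n.
have hd : (n./2 <= n - n./2)%N by lia.
case: (ltnP k n./2) => [kl|]; last by lia.
have e1 : (n - k = (n./2 - k) + (n - n./2))%N by lia.
have e2 : (n./2 = k + (n./2 - k))%N by lia.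
have := @core2 k (n./2 - k) (n - n./2).
rewrite -e1 -e2 heq ltnn => h; exfalso; apply: notF; apply: h; lia.
Qed.
Lemma kk_le_all n k : (k <= n -> k * (n - k) <= n./2 * (n - n./2))%N.
Proof.
move=> kn; case: (leqP k n./2) => kh; first exact: kk_le.
have hn := odd_double_half n.
have -> : (k * (n - k) = (n - k) * (n - (n - k)))%N.
  by rewrite mulnC; congr (_ * _); lia.
apply: kk_le; lia.
Qed.
Lemma kk_eq_all n k : (k <= n -> k * (n - k) = n./2 * (n - n./2) ->
  k = n./2 \/ k = n - n./2)%N.
Proof.
move=> kn heq; case: (leqP k n./2) => kh; first by left; exact: kk_eq.
have hn := odd_double_half n.
right; have : (n - k = n./2)%N.
  apply: kk_eq; first lia.
  by rewrite -heq mulnC; congr (_ * _); lia.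
lia.
Qed.


Lemma half_facts n : (2 <= n)%N -> (0 < n./2)%N /\ (0 < n - n./2)%N.
Proof. move=> n2; have hn := odd_double_half n; split; lia. Qed.
Lemma sub_sub_half n : (n./2 <= n)%N -> (n - (n - n./2) = n./2)%N.
Proof. move=> h; lia. Qed.
Lemma addKn' a b c : (a + b = c -> b = c - a)%N.
Proof. by move<-; rewrite addKn. Qed.
Lemma half_le n : (n./2 <= n)%N.
Proof. have hn := odd_double_half n; lia. Qed.

Local Open Scope ring_scope.
Theorem theorem5 (R : rcfType) (n : nat) : (2 <= n)%N ->
  [/\ simple_graph (Kbip n), connected_graph (Kbip n), bipartite (Kbip n) &
    forall e : rel 'I_n, simple_graph e -> connected_graph e -> bipartite e ->
    [/\ NGG R e <= NGG R (Kbip n),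
        GG R e <= GG R (Kbip n),
        NGG R e = NGG R (Kbip n) -> graph_iso e (Kbip n) &
        GG R e = GG R (Kbip n) -> graph_iso e (Kbip n)]].
Proof.
move=> n2.
have sK : simple_graph (Kbip n) by split=> [u v|u]; [rewrite /Kbip eq_sym | rewrite /Kbip eqxx].
have cK := Kbip_conn n2.
have hK : forall u v, Kbip n u v -> (u \in A0 n) != (v \in A0 n) by move=> u v; rewrite Kbip_cb.
split=> //; first by exists (A0 n).
move=> e sg c [A hA].
have n0 : (0 < n)%N by apply: leq_trans n2.
have hn := odd_double_half n.
set h := n./2 in hn *.
set P := (h * (n - h))%N.
have cA0 : #|~: A0 n| = (n - h)%N by apply: addKn'; rewrite /h -card_A0 cardsC card_ord.
have NK : NGG R (Kbip n) = Num.sqrt (P%:R).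
  by rewrite (NGG_cb R cK (Kbip_cb (n := n))) card_A0 cA0.
have GK := GG_NGG R n2 cK hK.
have GE := GG_NGG R n2 c hA.
have cAc : #|~: A| = (n - #|A|)%N by apply: addKn'; rewrite cardsC card_ord.
have An : (#|A| <= n)%N by rewrite -[X in (_ <= X)%N](card_ord n) max_card.
have mle : (medges e <= P)%N.
  apply: (leq_trans (medges_le sg hA)); rewrite cAc; exact: kk_le_all.
have P0 : (0 < P)%N by rewrite /P muln_gt0; case: (half_facts n2) => -> ->.
set t := Num.sqrt (P%:R : R).
have t0 : 0 < t by rewrite sqrtr_gt0 ltr0n.
have tt : t * t = P%:R by rewrite -expr2 sqr_sqrtr ?ler0n.
have B := @NGG_bound R n e A t n0 sg c hA t0.
have Nle : NGG R e <= t.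
  have : (medges e)%:R / t <= t.
    by rewrite ler_pdivrMr // tt ler_nat.
  move: B; set x := (medges e)%:R / t; lra.
have eqc0 : (P <= medges e)%N -> graph_iso e (Kbip n).
  move=> Pm.
  have mA : medges e = (#|A| * #|~: A|)%N.
    apply/eqP; rewrite eqn_leq medges_le //=.
    apply: leq_trans Pm; rewrite cAc; exact: kk_le_all.
  have hA' := medges_eq sg hA mA.
  have kA : (#|A| * (n - #|A|) = P)%N.
    apply/eqP; rewrite eqn_leq kk_le_all //= -cAc -mA; exact: Pm.
  case: (kk_eq_all An kA) => cardA.
    exact: iso_cb cardA hA'.
  apply: (iso_cb (A := ~: A)); first by rewrite cAc cardA sub_sub_half // half_le.
  by move=> x y; rewrite hA' !inE; case: (x \in A); case: (y \in A).
have eqc : t <= NGG R e -> graph_iso e (Kbip n).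
  move=> tN; apply: eqc0.
  have : t <= (medges e)%:R / t by move: B; set x := (medges e)%:R / t; lra.
  by rewrite ler_pdivlMr // tt ler_nat.
have s0 : 0 <= Num.sqrt (n%:R - 2 : R) by apply: sqrtr_ge0.
split.
- by rewrite NK.
- by rewrite GE GK NK ler_wpM2l.
- by move=> hN; apply: eqc; rewrite hN NK.
move=> hG.
case: (ltngtP n 2) => [|n3|n2'] //; first by rewrite ltnNge n2.
  have hs : Num.sqrt (n%:R - 2 : R) != 0.
    by rewrite sqrtr_eq0 -ltNge subr_gt0 (ltr_nat R 2 n).
  rewrite GE GK in hG; apply: eqc; have := mulfI hs hG; rewrite NK => ->.
  exact: lexx.
apply: eqc0; have -> : (P = 1)%N by rewrite /P /h n2'.
exact: medges_pos n2 sg c.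
Qed.
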